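(* Let $\mathcal{L}$ be a square lattice, let $\beta$ be a maximal element of $J(\mathcal{L})$, and let $\alpha \in \mathcal{L}_\beta$. Then \[ |E_\alpha \setminus E_\alpha(\mathcal{L}_\beta)| = |E_\alpha| - |E_\alpha(\mathcal{L}_\beta)| \geq |\mathcal{L}| - |\mathcal{L}_\beta| - 1. \]
   Context: All lattices are finite distributive. $x \in \mathcal{L}$ is join-irreducible if $x = y\vee z$ implies $x=y$ or $x=z$ (so the minimum, the root, is join-irreducible); $J(\mathcal{L})$ is the poset of join-irreducibles. $\mathcal{L}$ is a tree lattice if the Hasse diagram of $J(\mathcal{L})$ is a tree; a square lattice is a tree lattice in which every vertex of this Hasse diagram other than the root has degree at most two. For a maximal $\beta \in J(\mathcal{L})$, the pruning $\mathcal{L}_\beta$ is the lattice of hereditary subsets of $J(\mathcal{L})\setminus\{\beta\}$, identified (via Birkhoff's theorem) with the sublattice $\{\gamma \in \mathcal{L} : \gamma \not\geq \beta\}$ of $\mathcal{L}$. A diamond in a lattice $\mathcal{M}$ is a set $\{x, y, x\vee y, x\wedge y\}$ with $x, y \in \mathcal{M}$ non-comparable. For $\alpha \in \mathcal{M}$, $E_\alpha(\mathcal{M}) = \{(\alpha,\gamma) : \text{some diamond of } \mathcal{M} \text{ contains both } \alpha \text{ and } \gamma\}$, and $E_\alpha = E_\alpha(\mathcal{L})$. *)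

(* Defs.v *)
From HB Require Import structures.
From mathcomp Require Import all_boot all_order all_algebra.
Set Implicit Arguments.
Unset Strict Implicit.
Unset Printing Implicit Defensive.
Import Order.TTheory.
Local Open Scope order_scope.

Section Defs.
Context {d : Order.disp_t} {T : finTBDistrLatticeType d}.

(* join-irreducible, as in the paper: x = y \/ z implies x = y or x = z
   (so the bottom element is join-irreducible) *)
Definition join_irr (x : T) : bool :=
  [forall y : T, forall z : T, (x == y `|` z) ==> ((x == y) || (x == z))].

Definition JL : {set T} := [set x | join_irr x].

Definition Jcovers (x y : T) : bool :=
  [&& x \in JL, y \in JL, x < y & [forall z : T, (z \in JL) ==> ~~ ((x < z) && (z < y))]].

Definition hasse_adj (x y : T) : bool := Jcovers x y || Jcovers y x.

Definition hasse_connected : Prop :=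
  forall x y, x \in JL -> y \in JL -> connect hasse_adj x y.

Definition hasse_acyclic : Prop :=
  forall c : seq T, uniq c -> (3 <= size c)%N -> ~~ cycle hasse_adj c.

Definition tree_lattice : Prop := hasse_connected /\ hasse_acyclic.

(* square lattice: tree lattice, every non-root vertex has degree <= 2;
   the root of J(L) is its minimum, the bottom of L *)
Definition square_lattice : Prop :=
  tree_lattice /\
  forall x, x \in JL -> x != \bot -> (#|[set y | hasse_adj x y]| <= 2)%N.

Definition maximal_J (b : T) : bool :=
  (b \in JL) && [forall y : T, (y \in JL) ==> (b <= y) ==> (y == b)].

Definition pruning (b : T) : {set T} := [set g | ~~ (b <= g)].

(* diamonds of a sublattice M (given as a subset of T closed under meet/join,
   so its lattice operations are those of T) *)
Definition diamond_of (x y : T) : {set T} := [set x; y; x `|` y; x `&` y].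

Definition in_common_diamond (M : {set T}) (a g : T) : bool :=
  [exists x : T, exists y : T,
     [&& x \in M, y \in M, ~~ (x >=< y),
         a \in diamond_of x y & g \in diamond_of x y]].

Definition Ealpha (M : {set T}) (a : T) : {set T * T} :=
  [set p : T * T | (p.1 == a) && in_common_diamond M a p.2].

End Defs.

(* Main.v *)
Require Import Defs.
From HB Require Import structures.
From mathcomp Require Import all_boot all_order all_algebra.
From mathcomp Require Import zify.
Import Order.TTheory GRing.Theory Num.Theory.

Section Helpers.
Context {d : Order.disp_t} {T : finTBDistrLatticeType d}.
Local Open Scope order_scope.

Definition cnt (x : T) := #|[set w : T | w < x]|.
Definition cntu (x : T) := #|[set w : T | x < w]|.

Lemma cnt_lt {x y : T} : x < y -> (cnt x < cnt y)%N.
Proof.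
move=> xy; apply: proper_card; apply/properP; split.
  by apply/subsetP => w; rewrite !inE => wx; exact: lt_trans wx xy.
by exists x; rewrite !inE ?ltxx.
Qed.

Lemma cntu_lt {x y : T} : x < y -> (cntu y < cntu x)%N.
Proof.
move=> xy; apply: proper_card; apply/properP; split.
  by apply/subsetP => w; rewrite !inE => wx; exact: lt_trans xy wx.
by exists y; rewrite !inE ?ltxx.
Qed.

Lemma bot_JL : (\bot : T) \in JL.
Proof.
rewrite inE; apply/forallP => y; apply/forallP => z; apply/implyP => /eqP h.
by apply/orP; left; rewrite eq_sym -lex0 h leUl.
Qed.

Lemma not_JL (m : T) : m \notin JL ->
  exists y, exists z, [/\ m = y `|` z, m != y & m != z].
Proof.
rewrite inE => /forallPn [y /forallPn [z]].
rewrite negb_imply negb_or => /and3P [/eqP e ny nz].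
by exists y, z.
Qed.

Lemma atom_exists (m : T) : m != \bot ->
  exists2 k, k \in JL & (k != \bot) && (k <= m).
Proof.
move: {2}(cnt m).+1 (ltnSn (cnt m)) => n.
elim: n m => // n IH m lt_mn mb.
case: (boolP (m \in JL)) => mJ; first by exists m; rewrite // mb lexx.
have [y [z [e ny nz]]] := not_JL _ mJ.
have ym : y <= m by rewrite e leUl.
case: (eqVneq y \bot) => yb.
  by move: nz; rewrite e yb join0x eqxx.
have ylt : y < m by rewrite lt_neqAle eq_sym ny ym.
have [k kJ /andP [kb ky]] := IH y (leq_trans (cnt_lt ylt) lt_mn) yb.
by exists k; rewrite // kb (le_trans ky ym).
Qed.

Lemma join_irr_decomp (x u : T) :
  (forall j, j \in JL -> j <= x -> j <= u) -> x <= u.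
Proof.
move: {2}(cnt x).+1 (ltnSn (cnt x)) => n.
elim: n x => // n IH x lt_xn H.
case: (boolP (x \in JL)) => xJ; first by apply: H.
have [y [z [e ny nz]]] := not_JL _ xJ.
have yx : y < x by rewrite lt_neqAle eq_sym ny e leUl.
have zx : z < x by rewrite lt_neqAle eq_sym nz e leUr.
rewrite e leUx; apply/andP; split.
  apply: IH (leq_trans (cnt_lt yx) lt_xn) _ => j jJ jy.
  by apply: H => //; exact: le_trans jy (ltW yx).
apply: IH (leq_trans (cnt_lt zx) lt_xn) _ => j jJ jz.
by apply: H => //; exact: le_trans jz (ltW zx).
Qed.

Lemma up_cover {a x : T} : a \in JL -> x \in JL -> a < x ->
  exists2 c, Jcovers a c & c <= x.
Proof.
move=> aJ.
move: {2}(cnt x).+1 (ltnSn (cnt x)) => n.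
elim: n x => // n IH x lt_xn xJ ax.
case: (boolP [forall z, (z \in JL) ==> ~~ ((a < z) && (z < x))]) => H.
  by exists x; rewrite // /Jcovers aJ xJ ax H.
move/forallPn: H => [z]; rewrite negb_imply negbK => /andP [zJ /andP [az zx]].
have [c ac cz] := IH z (leq_trans (cnt_lt zx) lt_xn) zJ az.
by exists c => //; exact: le_trans cz (ltW zx).
Qed.

Lemma low_cover {l k : T} : l \in JL -> k \in JL -> l < k ->
  exists c, Jcovers c k.
Proof.
move=> + kJ.
move: {2}(cntu l).+1 (ltnSn (cntu l)) => n.
elim: n l => // n IH l lt_ln lJ lk.
case: (boolP [forall z, (z \in JL) ==> ~~ ((l < z) && (z < k))]) => H.
  by exists l; rewrite /Jcovers lJ kJ lk H.
move/forallPn: H => [z]; rewrite negb_imply negbK => /andP [zJ /andP [lz zk]].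
exact: IH z (leq_trans (cntu_lt lz) lt_ln) zJ zk.
Qed.

Lemma uniq_up (k a b : T) : square_lattice (T := T) -> k \in JL -> k != \bot ->
  Jcovers k a -> Jcovers k b -> a = b.
Proof.
move=> [_ deg] kJ kb ca cb.
have [l cl] : exists c, Jcovers c k by apply: low_cover bot_JL kJ _; rewrite lt0x.
apply/eqP; apply/negP => /negP ab.
have lk : l < k by case/and4P: cl.
have ka : k < a by case/and4P: ca.
have kb' : k < b by case/and4P: cb.
have U : uniq [:: l; a; b].
  rewrite /= !inE negb_or ab andbT; apply/andP; split.
    by apply/andP; split; rewrite lt_eqF // (lt_trans lk).
  by [].
have := deg k kJ kb.
move=> H.
have : (3 <= #|[set y | hasse_adj k y]|)%N.
  have U3 : #|[:: l; a; b]| = 3 by apply/card_uniqP.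
  rewrite -U3; apply: subset_leq_card; apply/subsetP => y.
  rewrite !inE /hasse_adj => /or3P [] /eqP ->; by rewrite ?ca ?cb ?cl ?orbT.
by move=> h; move: (leq_trans h H).
Qed.

Lemma chain_up (k x y : T) : square_lattice (T := T) -> k \in JL -> k != \bot ->
  x \in JL -> y \in JL -> k <= x -> k <= y -> (x <= y) || (y <= x).
Proof.
move=> sq.
move: {2}(cntu k).+1 (ltnSn (cntu k)) => n.
elim: n k => // n IH k lt_kn kJ kb xJ yJ kx ky.
case: (eqVneq x k) => [-> | xk]; first by rewrite ky.
case: (eqVneq y k) => [-> | yk]; first by rewrite kx orbT.
have kx' : k < x by rewrite lt_neqAle eq_sym xk kx.
have ky' : k < y by rewrite lt_neqAle eq_sym yk ky.
have [c1 cc1 c1x] := up_cover kJ xJ kx'.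
have [c2 cc2 c2y] := up_cover kJ yJ ky'.
have e := uniq_up _ _ _ sq kJ kb cc1 cc2; subst c2.
have kc : k < c1 by case/and4P: cc1.
have cJ : c1 \in JL by case/and4P: cc1.
have cb : c1 != \bot by rewrite -lt0x (le_lt_trans (le0x k) kc).
exact: IH c1 (leq_trans (cntu_lt kc) lt_kn) cJ cb xJ yJ c1x c2y.
Qed.

Lemma join_prime (b x y : T) : b \in JL -> b <= x `|` y -> (b <= x) || (b <= y).
Proof.
move=> bJ bxy.
have e : b = (b `&` x) `|` (b `&` y) by rewrite -meetUr; apply/esym/meet_idPl.
move: bJ; rewrite inE => /forallP/(_ (b `&` x))/forallP/(_ (b `&` y)).
rewrite -e eqxx /= => /orP [] /eqP e'.
  by rewrite {1}e' leIr.
by rewrite {2}e' leIr orbT.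
Qed.

Lemma F2 (b j : T) : square_lattice (T := T) -> maximal_J b -> j \in JL ->
  ~~ (j <= b) -> b `&` j = \bot.
Proof.
move=> sq /andP [bJ mb] jJ jb.
apply/eqP; apply/negPn/negP => ne.
have [k kJ /andP [kb kle]] := atom_exists _ ne.
move: kle; rewrite lexI => /andP [kbb kj].
case/orP: (chain_up _ _ _ sq kJ kb bJ jJ kbb kj) => h.
  move/forallP: mb => /(_ j); rewrite jJ h /= => /eqP ejb.
  by move: jb; rewrite ejb lexx.
by move: jb; rewrite h.
Qed.

Lemma diamond_pruning (b x y w : T) : b \in JL -> x \in pruning b ->
  y \in pruning b -> w \in diamond_of x y -> w \in pruning b.
Proof.
move=> bJ; rewrite /diamond_of !inE => xb yb.
move=> /orP [/orP [/orP [] | ] | ] /eqP -> //.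
  by apply/negP => /(join_prime _ _ _ bJ) /orP []; apply/negP.
by apply/negP => h; move: xb; rewrite (le_trans h (leIl _ _)).
Qed.

Lemma key (a b g : T) : square_lattice (T := T) -> maximal_J b ->
  ~~ (b <= a) -> b <= g -> g != a `|` b -> in_common_diamond [set: T] a g.
Proof.
move=> sq mb ba bg gab.
have bJ : b \in JL by case/andP: mb.
case: (boolP (a <= g)) => ag; last first.
  apply/existsP; exists a; apply/existsP; exists g.
  rewrite /diamond_of !inE !eqxx ?orbT /= andbT /Order.comparable negb_or ag /=.
  by apply/negP => h; move: ba; rewrite (le_trans bg h).
pose c := \join_(j | (j \in JL) && (j <= g) && ~~ (j <= b)) j.
have bc : b `&` c = \bot.
  apply: (big_ind (fun x => b `&` x = \bot)); first by rewrite meetx0.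
    by move=> x y hx hy; rewrite meetUr hx hy joinx0.
  by move=> j /andP [/andP [jJ _] jb]; apply: F2.
have cg : c <= g by apply/joinsP => j /andP [/andP [_ ->]].
have eg : (a `|` b) `|` (a `|` c) = g.
  apply/le_anti; apply/andP; split.
    by rewrite !leUx ag bg cg.
  apply: join_irr_decomp => j jJ jg.
  case: (boolP (j <= b)) => jb.
    apply: (le_trans jb); apply: (le_trans (leUr b a)); exact: leUl.
  have jc : j <= c by apply: (joins_sup (fun j => j)); rewrite jJ jg jb.
  apply: (le_trans jc); apply: (le_trans (leUr c a)); exact: leUr.
have em : (a `|` b) `&` (a `|` c) = a by rewrite -joinIr bc joinx0.
apply/existsP; exists (a `|` b); apply/existsP; exists (a `|` c).
rewrite /diamond_of !inE em eg !eqxx ?orbT /= andbT.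
rewrite /Order.comparable negb_or; apply/andP; split.
  apply/negP => h.
  have := le_trans (leUr b a) h => /(join_prime _ _ _ bJ) /orP [] h'.
    by move: ba; rewrite h'.
  move: ba; have -> : b = \bot by rewrite -bc; apply/esym/meet_idPl.
  by rewrite le0x.
apply/negP => /join_idPl h.
by move: gab; rewrite -eg h eqxx.
Qed.

End Helpers.

Theorem mainTheorem9 (d : Order.disp_t) (T : finTBDistrLatticeType d)
    (beta alpha : T) :
  square_lattice (T := T) ->
  maximal_J beta ->
  alpha \in pruning beta ->
  let E := Ealpha [set: T] alpha in
  let Eb := Ealpha (pruning beta) alpha in
  ((#|E :\: Eb|%:Z = #|E|%:Z - #|Eb|%:Z)%R /\
   (#|T|%:Z - #|pruning beta|%:Z - 1 <= #|E :\: Eb|%:Z)%R).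
Proof.
move=> sq mb ap E Eb.
have bJ : beta \in JL by case/andP: mb.
have sub : Eb \subset E.
  apply/subsetP => p; rewrite /Eb /E /Ealpha /in_common_diamond !inE.
  case/andP => -> /existsP [x /existsP [y /and5P [_ _ h1 h2 h3]]].
  by apply/existsP; exists x; apply/existsP; exists y; rewrite h1 h2 h3 !inE.
have le1 := subset_leq_card sub.
have c1 : #|E :\: Eb| = (#|E| - #|Eb|)%N by rewrite cardsD (setIidPr sub).
split; first by rewrite c1 subzn.
set S := (~: pruning beta) :\ (alpha `|` beta)%O.
have h2 := cardsC (pruning beta).
have h3 := cardsD1 (alpha `|` beta)%O (~: pruning beta).
have h4 : (#|S| <= #|E :\: Eb|)%N.
  rewrite -(card_imset (mem S) (fun x y (e : (alpha, x) = (alpha, y)) => congr1 snd e)).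
  apply: subset_leq_card; apply/subsetP => p /imsetP [g gS ->].
  move: gS; rewrite /S !inE negbK => /andP [gab bg].
  rewrite /Eb /E /Ealpha /= eqxx /=.
  have ba : ~~ (beta <= alpha)%O by move: ap; rewrite inE.
  rewrite (key _ _ _ sq mb ba bg gab) andbT; apply/negP => /existsP [x /existsP [y /and5P [xP yP _ _ gd]]].
  by have := diamond_pruning _ _ _ _ bJ xP yP gd; rewrite inE bg.
have h5 : (#|~: pruning beta| <= #|S|.+1)%N.
  by rewrite h3 -/S; case: (_ \in _).
move: h2 h4 h5; set x1 := #|T|; set x2 := #|pruning beta|; set x3 := #|~: pruning beta|; set x4 := #|S|; set x5 := #|E :\: Eb|.
move=> h2 h4 h5; lia.
Qed.
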